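(* Let $i,m\ge1$, let $u,v$ be strictly increasing words with letters in $[(i-1)m+1,im]$ of respective lengths $r\le s$, and let $w,w'$ be strictly increasing words with letters in $[(i-1)m]$. Then for every $k\ge2$, row-inserting (letter by letter, left to right) the word $w'v^{(k)}$ into the one-row tableau whose row is $wu^{(k)}$ yields a tableau with exactly two rows, whose first row is $x\,(v+m)^{(k-1)}$ and whose second row is $x'\,(u+m)^{(k-1)}$ for some increasing words $x,x'$ with letters in $[im]$ (possibly of different lengths).
   Context: For a word $y=y_1\cdots y_n$, $y+m=(y_1+m)\cdots(y_n+m)$, and $y^{(k)}=y\,(y+m)\,(y+2m)\cdots(y+(k-1)m)$ (concatenation, with the given $m$). Juxtaposition of words denotes concatenation. Row insertion is Schensted row insertion. *)

(* Defs.v *)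
(* Words are seq nat; letters are positive integers. *)
From mathcomp Require Import all_boot.
Set Implicit Arguments. Unset Strict Implicit. Unset Printing Implicit Defensive.

Definition shiftw (m : nat) (y : seq nat) : seq nat := map (fun a => a + m) y.

(* y^(k) = y (y+m) (y+2m) ... (y+(k-1)m) *)
Definition powk (m k : nat) (y : seq nat) : seq nat :=
  flatten [seq shiftw (j * m) y | j <- iota 0 k].

Definition letters_in (a b : nat) (y : seq nat) : bool :=
  all (fun c => (a <= c) && (c <= b)) y.

Fixpoint row_ins (x : nat) (r : seq nat) : option nat * seq nat :=
  match r with
  | [::] => (None, [:: x])
  | y :: r' => if x < y then (Some y, x :: r')
               else let: (b, r'') := row_ins x r' in (b, y :: r'')
  end.

(* Schensted row insertion into a tableau given as its list of rows
   (first row first). *)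
Fixpoint tab_ins (x : nat) (T : seq (seq nat)) : seq (seq nat) :=
  match T with
  | [::] => [:: [:: x]]
  | r :: T' => let: (b, r') := row_ins x r in
               match b with
               | None => r' :: T'
               | Some y => r' :: tab_ins y T'
               end
  end.

Definition word_ins (T : seq (seq nat)) (w : seq nat) : seq (seq nat) :=
  foldl (fun T a => tab_ins a T) T w.

(* Main.v *)
Require Import Defs.
From mathcomp Require Import all_boot.
From mathcomp Require Import zify.
Set Implicit Arguments. Unset Strict Implicit. Unset Printing Implicit Defensive.


Lemma sorted_catL (s1 s2 : seq nat) :
  sorted leq s1 -> sorted leq s2 ->
  (forall x y, x \in s1 -> y \in s2 -> x <= y) -> sorted leq (s1 ++ s2).
Proof.
elim: s1 => [//|a s1 IH] /= Hp Hs2 H.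
rewrite path_sortedE; last exact: leq_trans.
move: Hp; rewrite path_sortedE; last exact: leq_trans.
case/andP=> Ha Hs1; rewrite all_cat Ha /=; apply/andP; split.
- by apply/allP=> y Hy; apply: H; rewrite ?inE ?eqxx.
- by apply: IH => // x y Hx Hy; apply: H; rewrite // inE Hx orbT.
Qed.

Lemma sorted_cons_ge (a : nat) s : sorted leq (a :: s) -> forall y, y \in s -> a <= y.
Proof.
move=> /= Hp; have := order_path_min leq_trans Hp => /allP; exact.
Qed.

Lemma row_ins_mem x r z : z \in (row_ins x r).2 -> (z == x) || (z \in r).
Proof.
elim: r => [|y r IH] /=; first by rewrite !inE orbF.
case: ifP => _ /=.
  by rewrite !inE; case/orP=> ->; rewrite ?orbT.
case E: (row_ins x r) => [b r''] /=; rewrite inE; case/orP=> [/eqP->|]; first by rewrite inE eqxx orbT.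
move=> Hz; move: (IH); rewrite E /= => /(_ Hz); rewrite inE.
by case/orP=> ->; rewrite ?orbT.
Qed.

Lemma row_ins_bump x r b : (row_ins x r).1 = Some b -> b \in r.
Proof.
elim: r => [|y r IH] //=.
case: ifP => _; first by case=> ->; rewrite inE eqxx.
case E: (row_ins x r) => [b' r''] /= Hb; rewrite inE; apply/orP; right.
by apply: IH; rewrite E.
Qed.

Lemma row_ins_sorted x r : sorted leq r -> sorted leq (row_ins x r).2.
Proof.
elim: r => [//|y r IH] Hs /=.
case: ifP => Hxy.
  case: r Hs {IH} => [//|z r] /= /andP[Hyz ->]; rewrite andbT.
  by apply: leq_trans Hyz; apply: ltnW.
case E: (row_ins x r) => [b r''] /=.
rewrite path_sortedE; last exact: leq_trans.
have Hs' : sorted leq r by move: Hs => /= /path_sorted.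
move: (IH Hs'); rewrite E /= => ->; rewrite andbT.
apply/allP=> z Hz.
have : z \in (row_ins x r).2 by rewrite E.
case/row_ins_mem/orP => [/eqP ->|Hzr]; first by rewrite leqNgt Hxy.
exact: sorted_cons_ge Hs _ Hzr.
Qed.

Lemma tab_ins_gen (P : nat -> bool) x T :
  P x -> all (all P) T -> all (all P) (tab_ins x T).
Proof.
elim: T x => [|r T IH] x Px /=; first by rewrite Px.
case/andP=> Hr HT.
have Hr' : all P (row_ins x r).2.
  apply/allP=> z /row_ins_mem /orP[/eqP->//|]; exact: (allP Hr).
case E: (row_ins x r) => [[b|] r'] /=; rewrite E /= in Hr'; rewrite Hr' //=.
apply: IH => //; apply: (allP Hr); apply: (@row_ins_bump x); by rewrite E.
Qed.

Lemma tab_ins_sorted x T : all (sorted leq) T -> all (sorted leq) (tab_ins x T).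
Proof.
elim: T x => [|r T IH] x //=.
case/andP=> Hr HT.
have Hr' := row_ins_sorted x Hr.
case E: (row_ins x r) => [[b|] r'] /=; rewrite E /= in Hr'; rewrite Hr' //=.
exact: IH.
Qed.

Lemma word_ins_gen (P : nat -> bool) X T :
  all P X -> all (all P) T -> all (all P) (word_ins T X).
Proof.
elim: X T => [//|a X IH] T /= /andP[Pa PX] HT.
rewrite /word_ins /=; apply: IH => //; exact: tab_ins_gen.
Qed.

Lemma word_ins_sorted X T : all (sorted leq) T -> all (sorted leq) (word_ins T X).
Proof.
elim: X T => [//|a X IH] T HT.
rewrite /word_ins /=; apply: IH; exact: tab_ins_sorted.
Qed.

Lemma sorted_cat_le (s1 s2 : seq nat) y x :
  sorted leq (s1 ++ s2) -> y \in s1 -> x \in s2 -> y <= x.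
Proof.
elim: s1 => [//|a s1 IH] Hs; rewrite inE => /orP[/eqP->|Hy] Hx.
  by apply: (sorted_cons_ge Hs); rewrite mem_cat Hx orbT.
apply: IH => //; by move: Hs => /= /path_sorted.
Qed.

Lemma sorted_take_drop (S : seq nat) c y x :
  sorted leq S -> y \in take c S -> x \in drop c S -> y <= x.
Proof. by rewrite -{1}(cat_take_drop c S); apply: sorted_cat_le. Qed.


Definition cnt (a : nat) (S : seq nat) := count (fun y => y <= a) S.

Lemma cnt_take a S : sorted leq S -> all (fun y => y <= a) (take (cnt a S) S).
Proof.
elim: S => [//|y S IH] Hs /=; rewrite /cnt /=.
have Hs' : sorted leq S by move: Hs => /= /path_sorted.
case: (leqP y a) => Hy /=; first by rewrite Hy IH.
suff -> : count (fun y => y <= a) S = 0 by [].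
apply/eqP; rewrite -leqn0 leqNgt -has_count; apply/hasP => -[z Hz Hza].
have := sorted_cons_ge Hs Hz; lia.
Qed.

Lemma cnt_nth a S : sorted leq S -> cnt a S < size S -> a < nth 0 S (cnt a S).
Proof.
elim: S => [//|y S IH] Hs /=; rewrite /cnt /=.
have Hs' : sorted leq S by move: Hs => /= /path_sorted.
case: (leqP y a) => Hy /=; first by rewrite add1n ltnS => H; apply: IH.
suff -> : count (fun y => y <= a) S = 0 by [].
apply/eqP; rewrite -leqn0 leqNgt -has_count; apply/hasP => -[z Hz Hza].
have := sorted_cons_ge Hs Hz; lia.
Qed.

Lemma row_ins_app a A S :
  (forall y, y \in A -> y <= a) ->
  row_ins a (A ++ S) = ((row_ins a S).1, A ++ (row_ins a S).2).
Proof.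
elim: A => [|y A IH] HA /=; first by case: (row_ins a S).
have -> : a < y = false by apply/negbTE; rewrite -leqNgt; apply: HA; rewrite inE eqxx.
rewrite IH; first by case: (row_ins a S).
by move=> z Hz; apply: HA; rewrite inE Hz orbT.
Qed.

Lemma row_ins_step a S : sorted leq S ->
  row_ins a S = if cnt a S < size S then
     (Some (nth 0 S (cnt a S)), take (cnt a S) S ++ a :: drop (cnt a S).+1 S)
  else (None, S ++ [:: a]).
Proof.
elim: S => [//|y S IH] Hs /=; rewrite /cnt /=.
have Hs' : sorted leq S by move: Hs => /= /path_sorted.
case: (ltnP a y) => Hy /=.
  have H0 : count (fun z => z <= a) S = 0.
    apply/eqP; rewrite -leqn0 leqNgt -has_count; apply/hasP => -[z Hz Hza].
    have := sorted_cons_ge Hs Hz; lia.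
  by rewrite H0 /= drop0.
rewrite IH // /cnt add1n add0n ltnS.
by case: ifP.
Qed.

Lemma row_ins_end b B : (forall y, y \in B -> y <= b) ->
  row_ins b B = (None, B ++ [:: b]).
Proof.
elim: B => [//|y B IH] HB /=.
have -> : b < y = false by apply/negbTE; rewrite -leqNgt; apply: HB; rewrite inE eqxx.
by rewrite IH // => z Hz; apply: HB; rewrite inE Hz orbT.
Qed.

Fixpoint runK (S X : seq nat) : seq nat :=
  match X with
  | [::] => [::]
  | a :: X' => take (cnt a S) S ++ a :: runK (drop (cnt a S).+1 S) X'
  end.
Fixpoint runB (S X : seq nat) : seq nat :=
  match X with
  | [::] => [::]
  | a :: X' => (if cnt a S < size S then [:: nth 0 S (cnt a S)] else [::])
                ++ runB (drop (cnt a S).+1 S) X'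
  end.
Fixpoint runC (S X : seq nat) : nat :=
  match X with
  | [::] => 0
  | a :: X' => (cnt a S).+1 + runC (drop (cnt a S).+1 S) X'
  end.

Lemma gen X A S B :
  sorted leq S -> sorted leq X ->
  (forall y x, y \in A -> x \in X -> y <= x) ->
  (forall y x, y \in B -> x \in S -> y <= x) ->
  word_ins [:: A ++ S; B] X =
  [:: A ++ runK S X ++ drop (runC S X) S; B ++ runB S X].
Proof.
elim: X A S B => [|a X IH] A S B HS HX HA HB /=; first by rewrite drop0 !cats0.
rewrite /word_ins /=.
have HAa : forall y, y \in A -> y <= a by move=> y Hy; apply: HA; rewrite // inE eqxx.
rewrite row_ins_app // row_ins_step //.
have HX' : sorted leq X by move: HX => /= /path_sorted.
have Hta := cnt_take a HS.
have Hge : forall x, x \in X -> a <= x by move=> x Hx; exact: (sorted_cons_ge HX Hx).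
set n := cnt a S.
have HA' : forall y x, y \in A ++ take n S ++ [:: a] -> x \in X -> y <= x.
  move=> y x; rewrite !mem_cat inE => /orP[Hy|/orP[Hy|/eqP->]] Hx.
  - by apply: HA; rewrite // inE Hx orbT.
  - by apply: leq_trans (Hge _ Hx); apply: (allP Hta).
  - exact: Hge.
have HS' : sorted leq (drop n.+1 S) by apply: drop_sorted.
case: ifP => Hn /=.
  set b := nth 0 S n.
  have Hb : b \in S by apply: mem_nth.
  rewrite row_ins_end; last by move=> y Hy; apply: HB.
  have HB' : forall y x, y \in B ++ [:: b] -> x \in drop n.+1 S -> y <= x.
    move=> y x; rewrite mem_cat inE => /orP[Hy|/eqP->] Hx.
      by apply: HB => //; apply: mem_drop Hx.
    apply: (sorted_take_drop HS _ Hx).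
    by rewrite (take_nth 0 Hn) mem_rcons inE eqxx.
  have E := IH (A ++ take n S ++ [:: a]) (drop n.+1 S) (B ++ [:: b]) HS' HX' HA' HB'.
  rewrite /word_ins -!catA /= in E; rewrite E drop_drop addnC.
  by rewrite -catA.
have Hn' : size S <= n by rewrite leqNgt Hn.
move: HA'; rewrite take_oversize // => HA'.
have E := IH (A ++ S ++ [:: a]) [::] B (erefl _) HX' HA' (fun y x _ (Hx : x \in [::]) => match notF Hx with end).
rewrite /word_ins -!catA /= in E; rewrite E.
rewrite [drop n.+1 S]drop_oversize; last exact: leq_trans Hn' _.
rewrite [drop _ S]drop_oversize; last by rewrite addSn ltnW // ltnS (leq_trans Hn') // leq_addr.
by rewrite /= -catA.
Qed.

Arguments cnt : simpl never.

Lemma runK_nil X : runK [::] X = X.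
Proof. by elim: X => //= a X ->. Qed.
Lemma runB_nil X : runB [::] X = [::].
Proof. by elim: X => //= a X ->. Qed.

Lemma phase2 X S : sorted leq S ->
  (forall t, t < size S -> t < size X -> nth 0 X t < nth 0 S t) ->
  size S <= size X ->
  [/\ runK S X = X, runB S X = S & size S <= runC S X].
Proof.
elim: X S => [|a X IH] [|b S] //= HS Hd Hsz.
  by rewrite runK_nil runB_nil.
have Hab : a < b by apply: (Hd 0).
have H0 : cnt a (b :: S) = 0.
  rewrite /cnt /= leqNgt Hab /=.
  apply/eqP; rewrite -leqn0 leqNgt -has_count; apply/hasP => -[z Hz Hza].
  have := sorted_cons_ge HS Hz; lia.
rewrite H0 /= drop0.
have HS' : sorted leq S by move: HS => /= /path_sorted.
have [-> -> Hc] := IH S HS' (fun t h1 h2 => Hd t.+1 h1 h2) Hsz.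
split => //; lia.
Qed.

Lemma runC_ge X S : size X <= runC S X.
Proof. elim: X S => //= a X IH S; have := IH (drop (cnt a S).+1 S); lia. Qed.

Lemma runC_bound X S l : l < size X ->
  cnt (nth 0 X l) S + (size X - l) <= runC S X.
Proof.
elim: X S l => [//|a X IH] S [|l] /= Hl.
  have := runC_ge X (drop (cnt a S).+1 S); rewrite subn0; lia.
have := IH (drop (cnt a S).+1 S) l Hl.
have : cnt (nth 0 X l) S <= (cnt a S).+1 + cnt (nth 0 X l) (drop (cnt a S).+1 S).
  rewrite /cnt -{1}(cat_take_drop (cnt a S).+1 S) count_cat leq_add2r.
  apply: leq_trans (count_size _ _) _; rewrite size_take; by case: ltnP.
lia.
Qed.

Lemma runK_le H X S : sorted leq S -> all (fun x => x <= H) X ->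
  all (fun x => x <= H) (runK S X).
Proof.
elim: X S => [//|a X IH] S HS /= /andP[Ha HX].
rewrite all_cat /= Ha IH ?andbT; last by [] ; last exact: drop_sorted.
apply/allP=> y Hy; have := allP (cnt_take a HS) y Hy => /= Hya; lia.
Qed.

Lemma runB_mem X S x : x \in runB S X -> x \in take (runC S X) S.
Proof.
elim: X S => [//|a X IH] S /=.
rewrite takeD mem_cat => /orP[|Hx]; last by rewrite mem_cat (IH _ Hx) orbT.
case: ifP => // Hn; rewrite inE => /eqP->.
by rewrite mem_cat (take_nth 0 Hn) mem_rcons inE eqxx.
Qed.

Lemma runB_filter H X S : sorted leq S -> all (fun x => x <= H) X ->
  filter (fun x => H < x) (runB S X) = filter (fun x => H < x) (take (runC S X) S).
Proof.
elim: X S => [|a X IH] S HS /=; first by rewrite take0.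
move/andP=> [Ha HX].
rewrite takeD filter_cat IH //; last exact: drop_sorted.
rewrite filter_cat; congr (_ ++ _).
have Hf : filter (fun x => H < x) (take (cnt a S) S) = [::].
  apply/eqP; rewrite -(negbK (_ == _)) -has_filter; apply/hasP=> -[z Hz Hzh].
  have := allP (cnt_take a HS) z Hz => /= Hza; lia.
case: ifP => Hn.
  rewrite (take_nth 0 Hn) -cats1 filter_cat Hf /=.
  have := cnt_nth HS Hn.
  by case: ifP.
have Hn' : size S <= cnt a S by rewrite leqNgt Hn.
move: Hf; rewrite !take_oversize //; last exact: leq_trans Hn' _.
Qed.


Lemma powkS m k y : powk m k.+1 y = y ++ powk m k (shiftw m y).
Proof.
rewrite /powk -addn1 addnC iotaD /= add0n.
have -> : shiftw 0 y = y by rewrite /shiftw (eq_map (addn0)) map_id.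
congr (_ ++ _).
have -> : iota 1 k = map (addn 1) (iota 0 k) by rewrite -iotaDl.
rewrite -map_comp; congr flatten.
apply: eq_map => j /=; rewrite /shiftw -map_comp; apply: eq_map => z /=.
rewrite mulSn; lia.
Qed.

Lemma size_shiftw m y : size (shiftw m y) = size y.
Proof. exact: size_map. Qed.

Lemma size_powk m k y : size (powk m k y) = k * size y.
Proof.
elim: k y => [|k IH] y; first by [].
by rewrite powkS size_cat IH size_shiftw mulSn.
Qed.

Lemma nth_powk m k y j p : p < size y -> j < k ->
  nth 0 (powk m k y) (j * size y + p) = nth 0 y p + j * m.
Proof.
elim: k y j => [//|k IH] y [|j] Hp Hj.
  by rewrite powkS mul0n add0n nth_cat Hp addn0.
rewrite powkS nth_cat mulSn -addnA ltnNge leq_addr /= addKn.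
rewrite -(size_shiftw m y) IH ?size_shiftw //.
rewrite /shiftw (nth_map 0) //; lia.
Qed.

Lemma mem_powk m k y x : x \in powk m k y ->
  exists j z, [/\ j < k, z \in y & x = z + j * m].
Proof.
elim: k y => [//|k IH] y; rewrite powkS mem_cat => /orP[Hx|].
  by exists 0, x; rewrite Hx addn0.
move/IH=> [j [z [Hj Hz ->]]].
move: Hz => /mapP [z' Hz' ->].
exists j.+1, z'; split => //; rewrite mulSn; lia.
Qed.

Lemma sorted_powk m k B y : (forall z, z \in y -> B < z <= B + m) ->
  sorted leq y -> sorted leq (powk m k y).
Proof.
elim: k B y => [|k IH] B y Hy Hs; first by [].
rewrite powkS; apply: sorted_catL => //.
  apply: (IH (B + m)).
    move=> z /mapP [z' Hz' ->]; have := Hy _ Hz'; lia.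
  rewrite /shiftw sorted_map; apply: sub_sorted Hs => a b /=; lia.
move=> a x Ha /mem_powk [j [z [_ /mapP [z' Hz' ->] ->]]].
have := Hy _ Ha; have := Hy _ Hz'; lia.
Qed.


Lemma dom_part L m k' (w u v : seq nat) c :
  0 < m ->
  (forall z, z \in u -> L < z <= L + m) ->
  (forall z, z \in v -> L < z <= L + m) ->
  (forall z, z \in w -> z <= L) ->
  sorted leq u -> 0 < size u -> size u <= size v ->
  sorted leq (w ++ powk m k'.+2 u) ->
  (forall l, l < size v -> cnt (nth 0 v l) (w ++ powk m k'.+2 u) + (size v - l) <= c) ->
  size (drop c (w ++ powk m k'.+2 u)) <= size (powk m k'.+1 (shiftw m v)) /\
  (forall t, t < size (drop c (w ++ powk m k'.+2 u)) ->
     t < size (powk m k'.+1 (shiftw m v)) ->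
     nth 0 (powk m k'.+1 (shiftw m v)) t < nth 0 (drop c (w ++ powk m k'.+2 u)) t).
Proof.
move=> Hm Hu Hv Hw Hsu Hr Hrs HR Hc.
set R := w ++ powk m k'.+2 u.
set r := size u; set s := size v.
have Hs : 0 < s by apply: leq_trans Hrs.
have HcR : forall l, l < s -> size w + cnt (nth 0 v l) u + (s - l) <= c.
  move=> l Hl; apply: leq_trans (Hc l Hl); rewrite leq_add2r /R /cnt count_cat powkS count_cat.
  have -> : count (fun y => y <= nth 0 v l) w = size w.
    apply/eqP; rewrite -all_count; apply/allP=> z Hz /=.
    have := Hw _ Hz; have := Hv _ (mem_nth 0 Hl). move=> /andP[/ltnW H1 _] H2; exact: leq_trans H2 H1.
  by rewrite leq_add2l leq_addr.
have HsR : size R = size w + k'.+2 * r by rewrite /R size_cat size_powk.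
split.
  rewrite size_drop size_powk size_shiftw HsR.
  have := HcR 0 Hs; have := leq_mul (leqnn k'.+2) Hrs.
  rewrite !mulSn; lia.
move=> t; rewrite size_drop size_powk size_shiftw HsR => Ht1 Ht2.
set j := t %/ s; set l := t %% s.
have Htjl : t = j * s + l by rewrite /j /l -divn_eq.
have Hl : l < s by rewrite /l ltn_pmod.
have Hj : j < k'.+1 by rewrite /j ltn_divLR.
rewrite nth_drop.
have -> : nth 0 (powk m k'.+1 (shiftw m v)) t = nth 0 v l + m + j * m.
  have Hsz : s = size (shiftw m v) by rewrite size_shiftw.
  rewrite Htjl {1}Hsz nth_powk -?Hsz //.
  by rewrite /shiftw (nth_map 0).
set cu := cnt (nth 0 v l) u.
have Hcu : cu <= r by apply: count_size.
have Hcl := HcR l Hl.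
set q := size w + (cu + j.+1 * r).
have Hjs : j.+1 * r <= j.+1 * s by apply: leq_mul.
have Hq : q <= c + t.
  rewrite /q Htjl; move: Hjs Hcl; rewrite !mulSn; lia.
have HctR : c + t < size R by rewrite HsR; lia.
have Hle : nth 0 R q <= nth 0 R (c + t).
  apply: (sorted_leq_nth leq_trans leqnn 0 HR) => //; rewrite inE /= -/R; exact: leq_ltn_trans Hq HctR.
apply: leq_trans Hle.
rewrite /R nth_cat.
have -> : (q < size w) = false by rewrite /q ltnNge leq_addr.
have -> : q - size w = cu + j.+1 * r by rewrite /q addKn.
have Hvl : L < nth 0 v l <= L + m := Hv _ (mem_nth 0 Hl).
case: (ltnP cu r) => Hcur.
  rewrite [cu + _]addnC /r nth_powk //.
  have := cnt_nth Hsu Hcur; rewrite -/cu mulSn; lia.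
have -> : cu = r by apply/eqP; rewrite eqn_leq Hcu.
have Hj2 : j.+2 < k'.+2.
  have : q < size R by lia.
  rewrite /q HsR ltn_add2l.
  have -> : cu = r by apply/eqP; rewrite eqn_leq Hcu.
  rewrite -mulSn ltn_pmul2r //.
rewrite -mulSn -[_ * r]addn0 /r nth_powk //.
have Hu0 : L < nth 0 u 0 <= L + m := Hu _ (mem_nth 0 Hr).
rewrite !mulSn; lia.
Qed.


Lemma first_step a R X : sorted leq R -> cnt a R < size R ->
  word_ins [:: R] (a :: X) = word_ins [:: R; [::]] (a :: X).
Proof.
move=> HR Hn; rewrite /word_ins /= row_ins_step // Hn /=.
by [].
Qed.

Lemma filter_none (p : pred nat) s : all (predC p) s -> filter p s = [::].
Proof. by elim: s => //= a s IH /andP[/negbTE -> /IH]. Qed.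

Lemma sorted_split H s : sorted leq s ->
  s = filter (fun c => c <= H) s ++ filter (fun c => H < c) s.
Proof.
elim: s => [//|a s IH] Hs /=.
have Hs' : sorted leq s by move: Hs => /= /path_sorted.
case: (leqP a H) => Ha /=; first by rewrite -IH.
rewrite filter_none; last first.
  by apply/allP=> z Hz /=; have := sorted_cons_ge Hs Hz; lia.
congr (_ :: _); apply/esym/all_filterP/allP=> z Hz.
have := sorted_cons_ge Hs Hz; lia.
Qed.

Lemma let1 a b (y : seq nat) z : letters_in (a + 1) b y -> z \in y -> a < z <= b.
Proof. by move=> H Hz; have := allP H z Hz; rewrite addn1. Qed.
Lemma let2 b (y : seq nat) z : letters_in 1 b y -> z \in y -> 0 < z <= b.
Proof. by move=> H Hz; have := allP H z Hz. Qed.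
Lemma ar1 y z L n : 0 < y <= L -> L < z <= L + n.+1 -> y <= z.
Proof. lia. Qed.
Lemma ar1' y z L n k : 0 < y <= L -> L < z <= n -> y <= z + k.
Proof. lia. Qed.
Lemma ar2 z L m : L < z <= L + m -> L + m < z + m <= L + m + m.
Proof. lia. Qed.
Lemma ar3 z L m k n : L + m < z <= k -> L + m < z + n.
Proof. lia. Qed.
Lemma ar4 x L m : 0 < x <= L -> 0 < x <= L + m.
Proof. lia. Qed.
Lemma ar5 x L m : L < x <= L + m -> 0 < x <= L + m.
Proof. lia. Qed.
Lemma ar6 L z n k : L < z <= k -> 0 < z + n.
Proof. lia. Qed.


Lemma word_ins_cat T X Y : word_ins T (X ++ Y) = word_ins (word_ins T X) Y.
Proof. exact: foldl_cat. Qed.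

Theorem mainTheorem8 (i m : nat) (u v w w' : seq nat) (k : nat) :
  1 <= i -> 1 <= m ->
  sorted ltn u -> letters_in ((i - 1) * m + 1) (i * m) u ->
  sorted ltn v -> letters_in ((i - 1) * m + 1) (i * m) v ->
  0 < size u -> size u <= size v ->
  sorted ltn w -> letters_in 1 ((i - 1) * m) w ->
  sorted ltn w' -> letters_in 1 ((i - 1) * m) w' ->
  2 <= k ->
  exists x x' : seq nat,
    [/\ sorted leq x, letters_in 1 (i * m) x,
        sorted leq x', letters_in 1 (i * m) x' &
        word_ins [:: w ++ powk m k u] (w' ++ powk m k v) =
          [:: x ++ powk m (k - 1) (shiftw m v);
              x' ++ powk m (k - 1) (shiftw m u)]].
Proof.
move=> Hi Hm Hsu Hlu Hsv Hlv Hr Hrs Hsw Hlw Hsw' Hlw' Hk.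
set L := (i - 1) * m.
have HH : i * m = L + m by rewrite /L -{1}(subnK Hi) mulnDl mul1n.
rewrite HH in Hlu Hlv *.
case: k Hk => [|[|k']] // _.
have -> : k'.+2 - 1 = k'.+1 by rewrite subn1.
have Hu : forall z, z \in u -> L < z <= L + m := fun z => let1 Hlu.
have Hv : forall z, z \in v -> L < z <= L + m := fun z => let1 Hlv.
have Hw : forall z, z \in w -> 0 < z <= L := fun z => let2 Hlw.
have Hw' : forall z, z \in w' -> 0 < z <= L := fun z => let2 Hlw'.
have sl : forall s : seq nat, sorted ltn s -> sorted leq s.
  by move=> s; apply: sub_sorted => x y; apply: ltnW.
set R1 := powk m k'.+1 (shiftw m u).
set W1 := powk m k'.+1 (shiftw m v).
set R := w ++ powk m k'.+2 u.
set X1 := w' ++ v.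
have HR : sorted leq R.
  apply: sorted_catL; [exact: sl | exact: (@sorted_powk m k'.+2 L u Hu (sl _ Hsu)) |].
  move=> y x Hy /mem_powk [j [z [_ Hz ->]]]; exact: ar1' (Hw _ Hy) (Hu _ Hz).
have HX1 : sorted leq X1.
  apply: sorted_catL; [exact: sl | exact: sl |].
  move=> y x Hy Hx; rewrite -(addn0 x); exact: ar1' (Hw' _ Hy) (Hv _ Hx).
have HsvS : forall z, z \in shiftw m v -> L + m < z <= L + m + m.
  by move=> z /mapP [z' Hz' ->]; apply: ar2; apply: Hv.
have HW1 : sorted leq W1.
  apply: (@sorted_powk m k'.+1 (L + m) _ HsvS).
  rewrite /shiftw sorted_map; apply: sub_sorted Hsv => a b /= Hab; rewrite leq_add2r; exact: ltnW.
have HW1gt : forall x, x \in W1 -> L + m < x.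
  move=> x /mem_powk [j [z [_ Hz ->]]]; exact: ar3 (HsvS _ Hz).
have HX1le : forall x, x \in X1 -> 0 < x <= L + m.
  move=> x; rewrite mem_cat => /orP[Hx|Hx]; [exact: ar4 (Hw' _ Hx) | exact: ar5 (Hv _ Hx)].
have HRpos : forall x, x \in R -> 0 < x.
  move=> x; rewrite mem_cat => /orP[Hx|/mem_powk [j [z [_ Hz ->]]]].
    by case/andP: (Hw _ Hx).
  exact: ar6 (Hu _ Hz).
set K1 := runK R X1; set B1 := runB R X1; set c := runC R X1.
set S' := drop c R.
have E1 : word_ins [:: R] X1 = [:: K1 ++ S'; B1].
  have := @gen X1 [::] R [::] HR HX1 (fun y x (Hy : y \in [::]) _ => match notF Hy with end)
     (fun y x (Hy : y \in [::]) _ => match notF Hy with end).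
  rewrite /= => <-.
  case HX1e : X1 => [|a0 X1'].
    have : 0 < size X1 by rewrite /X1 size_cat; exact: leq_trans (leq_trans Hr Hrs) (leq_addl _ _).
    by rewrite HX1e.
  apply: first_step => //.
  have Ha : a0 <= L + m by have := HX1le a0; rewrite HX1e inE eqxx => /(_ isT) /andP[_ ->].
  have Hy0 : nth 0 u 0 + m \in R.
    rewrite /R mem_cat powkS mem_cat; apply/orP; right; apply/orP; right.
    rewrite powkS mem_cat; apply/orP; left; apply: map_f; exact: mem_nth.
  have Hu0 : L < nth 0 u 0 <= L + m := Hu _ (mem_nth 0 Hr).
  have : has (predC (fun y => y <= a0)) R.
    apply/hasP; exists (nth 0 u 0 + m) => //=.
    by rewrite -ltnNge (leq_ltn_trans Ha) // ltn_add2r; case/andP: Hu0.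
  rewrite has_count /cnt => H1.
  by rewrite -(count_predC (fun y => y <= a0) R) -[X in X < _]addn0 ltn_add2l.
have HS' : sorted leq S' by apply: drop_sorted.
have HX1H : all (fun x => x <= L + m) X1.
  by apply/allP=> x /HX1le /andP[_ ->].
have HKle : all (fun x => x <= L + m) K1 by apply: runK_le.
have HKW : forall y x, y \in K1 -> x \in W1 -> y <= x.
  move=> y x Hy Hx; apply: leq_trans (ltnW (HW1gt _ Hx)); exact: (allP HKle).
have HBS : forall y x, y \in B1 -> x \in S' -> y <= x.
  move=> y x /runB_mem Hy Hx; exact: sorted_take_drop HR Hy Hx.
have Hc : forall l, l < size v -> cnt (nth 0 v l) R + (size v - l) <= c.
  move=> l Hl; have Hl' : size w' + l < size X1 by rewrite /X1 size_cat ltn_add2l.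
  have := runC_bound R Hl'.
  rewrite /X1 nth_cat ltnNge leq_addr /= addKn size_cat subnDl //.
have [Hdsz Hdom] := @dom_part L m k' w u v c Hm Hu Hv
   (fun z Hz => proj2 (elimT andP (Hw z Hz))) (sl _ Hsu) Hr Hrs HR Hc.
have [PK PB PC] : [/\ runK S' W1 = W1, runB S' W1 = S' & size S' <= runC S' W1] :=
  phase2 HS' Hdom Hdsz.
have Efin : word_ins [:: R] (X1 ++ W1) = [:: K1 ++ W1; B1 ++ S'].
  by rewrite word_ins_cat E1 (gen HS' HW1 HKW HBS) [runK _ _]PK [runB _ _]PB (drop_oversize PC) cats0.
have Hsorted : all (sorted leq) (word_ins [:: R] (X1 ++ W1)).
  by apply: word_ins_sorted; rewrite /= HR.
rewrite Efin /= in Hsorted; case/and3P: Hsorted => Hs1 Hs2 _.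
have Hpos : all (all (fun z => 0 < z)) (word_ins [:: R] (X1 ++ W1)).
  apply: word_ins_gen; last by rewrite /= andbT; apply/allP.
  rewrite all_cat; apply/andP; split; apply/allP=> x Hx.
    by case/andP: (HX1le x Hx).
  exact: leq_ltn_trans (leq0n _) (HW1gt x Hx).
rewrite Efin /= andbT in Hpos; case/andP: Hpos => Hp1 Hp2.
exists K1, (filter (fun c => c <= L + m) (B1 ++ S')); split.
- by have [] := cat_sorted2 Hs1.
- apply/allP=> z Hz; rewrite (allP HKle z Hz) andbT.
  by move: Hp1; rewrite all_cat => /andP[/allP /(_ z Hz) ->].
- exact: sorted_filter leq_trans _ _ Hs2.
- apply/allP=> z; rewrite mem_filter => /andP[-> Hz] /=.
  rewrite ?andbT; exact: (allP Hp2).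
rewrite powkS -/W1 catA -/X1 Efin; congr [:: _; _].
rewrite {1}(sorted_split (L + m) Hs2); congr (_ ++ _).
rewrite filter_cat (runB_filter (H := L + m) HR HX1H) -filter_cat cat_take_drop.
rewrite /R filter_cat powkS filter_cat -/R1.
have Fw : filter (fun c => L + m < c) w = [::].
  apply: filter_none; apply/allP=> z Hz /=; rewrite -leqNgt.
  case/andP: (Hw _ Hz) => _ H; exact: leq_trans H (leq_addr _ _).
have Fu : filter (fun c => L + m < c) u = [::].
  by apply: filter_none; apply/allP=> z Hz /=; rewrite -leqNgt; case/andP: (Hu _ Hz).
have FR : filter (fun c => L + m < c) R1 = R1.
  apply/all_filterP/allP=> x /mem_powk [j [z [_ /mapP [z' Hz' ->] ->]]].
  exact: ar3 (ar2 (Hu _ Hz')).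
by rewrite Fw Fu FR.
Qed.
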